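(* MCL and OMCL are expressively equivalent: for every MCL sentence over $AP$ there is an OMCL sentence over $AP$ satisfied by exactly the same Kripke trees, and vice versa.
   Context: Kripke trees over a finite set $AP$: non-blocking trees (nonempty prefix-closed sets $T$ of words over a set of directions, root $\varepsilon$, children $w\cdot d$, every node having a child) with $\mathit{Lab}:T\to2^{AP}$. A chain is a set of nodes any two of which are comparable by the descendant relation $\le$ ($x\le y$ iff $y=x\cdot u$ for some possibly empty $u$). MCL: formulas $\varphi::=p(x)\mid x\le y\mid x\in X\mid\neg\varphi\mid\varphi\wedge\varphi\mid\exists x.\varphi\mid\exists^CX.\varphi$ ($p\in AP$), with first-order variables ranging over nodes, $p(x)$ iff $p\in\mathit{Lab}(x)$, and $\exists^CX$ ranging over chains. OMCL (one-sorted MCL): formulas $\varphi::=X\subseteq p\mid X\subseteq Y\mid\mathrm{child}(X,Y)\mid\neg\varphi\mid\varphi\wedge\varphi\mid\exists^CX.\varphi$ with only second-order variables, ranging over chains; $X\subseteq p$ means every node in $X$ has $p$ in its label; $X\subseteq Y$ is set inclusion; $\mathrm{child}(X,Y)$ means every node of $X$ has some child in $Y$. A sentence has no free variables; a Kripke tree satisfies a sentence in the usual way. *)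

(* Defs.v *)
From mathcomp Require Import all_boot.
From Stdlib Require Import List.
Import ListNotations.

Set Implicit Arguments.
Unset Strict Implicit.
Unset Printing Implicit Defensive.

(* Nodes are words (lists) over a type [D] of directions; the root is [[]],
   the children of [w] are [w ++ [d]]. *)
Record ktree (D : Type) (AP : finType) := KTree {
  knode : list D -> Prop;
  klab  : list D -> {set AP};
  knode_nonempty : exists w, knode w;
  knode_prefix_closed : forall u v, knode (u ++ v) -> knode u;
  knode_nonblocking : forall w, knode w -> exists d, knode (w ++ [d])
}.

Definition desc {D : Type} (x y : list D) : Prop := exists u, y = x ++ u.

Definition is_chain {D : Type} {AP : finType} (T : ktree D AP)
  (X : list D -> Prop) : Prop :=
  (forall x, X x -> knode T x) /\
  (forall x y, X x -> X y -> desc x y \/ desc y x).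

Inductive mcl (AP : finType) : Type :=
| MProp : AP -> nat -> mcl AP
| MLe   : nat -> nat -> mcl AP
| MIn   : nat -> nat -> mcl AP
| MNeg  : mcl AP -> mcl AP
| MAnd  : mcl AP -> mcl AP -> mcl AP
| MEx   : nat -> mcl AP -> mcl AP
| MExC  : nat -> mcl AP -> mcl AP.

Fixpoint mcl_fv1 {AP : finType} (phi : mcl AP) (n : nat) : Prop :=
  match phi with
  | MProp _ x => x = n
  | MLe x y => x = n \/ y = n
  | MIn x _ => x = n
  | MNeg a => mcl_fv1 a n
  | MAnd a b => mcl_fv1 a n \/ mcl_fv1 b n
  | MEx x a => x <> n /\ mcl_fv1 a n
  | MExC _ a => mcl_fv1 a n
  end.

Fixpoint mcl_fv2 {AP : finType} (phi : mcl AP) (n : nat) : Prop :=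
  match phi with
  | MProp _ _ => False
  | MLe _ _ => False
  | MIn _ X => X = n
  | MNeg a => mcl_fv2 a n
  | MAnd a b => mcl_fv2 a n \/ mcl_fv2 b n
  | MEx _ a => mcl_fv2 a n
  | MExC X a => X <> n /\ mcl_fv2 a n
  end.

Definition mcl_sentence {AP : finType} (phi : mcl AP) : Prop :=
  forall n, ~ mcl_fv1 phi n /\ ~ mcl_fv2 phi n.

Definition upd {A : Type} (e : nat -> A) (n : nat) (a : A) : nat -> A :=
  fun m => if Nat.eqb m n then a else e m.

Fixpoint mcl_holds {D : Type} {AP : finType} (T : ktree D AP)
  (e1 : nat -> list D) (e2 : nat -> list D -> Prop) (phi : mcl AP) : Prop :=
  match phi with
  | MProp p x => p \in klab T (e1 x)
  | MLe x y => desc (e1 x) (e1 y)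
  | MIn x X => e2 X (e1 x)
  | MNeg a => ~ mcl_holds T e1 e2 a
  | MAnd a b => mcl_holds T e1 e2 a /\ mcl_holds T e1 e2 b
  | MEx x a => exists w, knode T w /\ mcl_holds T (upd e1 x w) e2 a
  | MExC X a => exists C, is_chain T C /\ mcl_holds T e1 (upd e2 X C) a
  end.

(* Satisfaction of a sentence: evaluation in a default environment
   (first-order variables at the root, second-order variables the empty
   chain); for sentences the environment is irrelevant. *)
Definition mcl_sat {D : Type} {AP : finType} (T : ktree D AP) (phi : mcl AP)
  : Prop := mcl_holds T (fun _ => []) (fun _ _ => False) phi.

Inductive omcl (AP : finType) : Type :=
| OSubP  : nat -> AP -> omcl AP
| OSub   : nat -> nat -> omcl AP
| OChild : nat -> nat -> omcl AP
| ONeg   : omcl AP -> omcl AP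
| OAnd   : omcl AP -> omcl AP -> omcl AP
| OExC   : nat -> omcl AP -> omcl AP.

Fixpoint omcl_fv {AP : finType} (phi : omcl AP) (n : nat) : Prop :=
  match phi with
  | OSubP X _ => X = n
  | OSub X Y => X = n \/ Y = n
  | OChild X Y => X = n \/ Y = n
  | ONeg a => omcl_fv a n
  | OAnd a b => omcl_fv a n \/ omcl_fv b n
  | OExC X a => X <> n /\ omcl_fv a n
  end.

Definition omcl_sentence {AP : finType} (phi : omcl AP) : Prop :=
  forall n, ~ omcl_fv phi n.

Fixpoint omcl_holds {D : Type} {AP : finType} (T : ktree D AP)
  (e : nat -> list D -> Prop) (phi : omcl AP) : Prop :=
  match phi with
  | OSubP X p => forall w, e X w -> p \in klab T w
  | OSub X Y => forall w, e X w -> e Y w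
  | OChild X Y => forall w, e X w -> exists d, e Y (w ++ [d])
  | ONeg a => ~ omcl_holds T e a
  | OAnd a b => omcl_holds T e a /\ omcl_holds T e b
  | OExC X a => exists C, is_chain T C /\ omcl_holds T (upd e X C) a
  end.

Definition omcl_sat {D : Type} {AP : finType} (T : ktree D AP) (phi : omcl AP)
  : Prop := omcl_holds T (fun _ _ => False) phi.

(* Main.v *)
Require Import Defs.
From mathcomp Require Import all_boot zify.
From Stdlib Require Import List Classical Lia Arith.
Import ListNotations.

Lemma cat_app {A : Type} (u v : list A) : cat u v = app u v.
Proof. induction u as [|a u IH]; simpl; [reflexivity| rewrite IH; reflexivity]. Qed.

Lemma upd_eq {A : Type} (e : nat -> A) n a : upd e n a n = a.
Proof. unfold upd; rewrite Nat.eqb_refl; reflexivity. Qed.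

Lemma upd_ne {A : Type} (e : nat -> A) n a m : m <> n -> upd e n a m = e m.
Proof. intro H; unfold upd; apply Nat.eqb_neq in H; rewrite H; reflexivity. Qed.

Lemma node_prefix {D : Type} {AP : finType} (T : ktree D AP) x u :
  knode T (app x u) -> knode T x.
Proof. rewrite -cat_app. apply knode_prefix_closed. Qed.

Lemma node_root {D : Type} {AP : finType} (T : ktree D AP) : knode T [].
Proof. destruct (knode_nonempty T) as [w Hw]. apply (node_prefix T [] w). exact Hw. Qed.

Lemma desc_refl {D : Type} (x : list D) : desc x x.
Proof. exists []; rewrite app_nil_r; reflexivity. Qed.

Lemma desc_len {D : Type} (x y : list D) : desc x y -> length x <= length y.
Proof. intros [u ->]; rewrite length_app; lia. Qed.

Lemma desc_snoc {D : Type} (x u : list D) d : desc x u -> desc x (u ++ [d]).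
Proof. intros [v ->]; exists (v ++ [d]); rewrite app_assoc; reflexivity. Qed.

Lemma desc_trans {D : Type} (x y z : list D) : desc x y -> desc y z -> desc x z.
Proof. intros [u ->] [v ->]; exists (u ++ v); rewrite app_assoc; reflexivity. Qed.

Lemma desc_comp {D : Type} (x y z : list D) : desc x z -> desc y z -> desc x y \/ desc y x.
Proof.
  intros [u Hu] [v Hv]. rewrite Hu in Hv.
  destruct (app_eq_app _ _ _ _ Hv) as [l [[H1 _]|[H1 _]]].
  - right; exists l; exact H1.
  - left; exists l; exact H1.
Qed.

Lemma desc_node {D : Type} {AP : finType} (T : ktree D AP) x y :
  knode T y -> desc x y -> knode T x.
Proof. intros Hy [u ->]. eapply node_prefix; exact Hy. Qed.

Lemma chain_single {D : Type} {AP : finType} (T : ktree D AP) w :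
  knode T w -> is_chain T (fun v => v = w).
Proof. intro H; split; [intros x ->; exact H| intros x y -> ->; left; apply desc_refl]. Qed.

Lemma chain_empty {D : Type} {AP : finType} (T : ktree D AP) :
  is_chain T (fun _ => False).
Proof. split; intros; contradiction. Qed.

Definition oall {AP : finType} v (f : omcl AP) := ONeg (OExC v (ONeg f)).
Definition oimp {AP : finType} (a b : omcl AP) := ONeg (OAnd a (ONeg b)).
Definition oor {AP : finType} (a b : omcl AP) := ONeg (OAnd (ONeg a) (ONeg b)).
Definition oempty {AP : finType} a k : omcl AP := oall k (OSub _ a k).
Definition osing {AP : finType} a k : omcl AP :=
  OAnd (ONeg (oempty a k)) (oall k (oimp (OSub _ k a) (oor (oempty k (k+1)) (OSub _ a k)))).
Definition ole {AP : finType} a b k : omcl AP :=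
  OExC k (OAnd (OSub _ a k) (OAnd (OSub _ b k)
   (oall (k+1) (oimp (OAnd (osing (k+1) (k+3)) (OSub _ (k+1) k))
     (oor (OSub _ (k+1) a)
          (OExC (k+2) (OAnd (osing (k+2) (k+3)) (OAnd (OSub _ (k+2) k) (OChild _ (k+2) (k+1)))))))))).

Arguments oall {AP} v f : simpl never.
Arguments oimp {AP} a b : simpl never.
Arguments oor {AP} a b : simpl never.
Arguments oempty {AP} a k : simpl never.
Arguments osing {AP} a k : simpl never.
Arguments ole {AP} a b k : simpl never.

Lemma holds_all {D : Type} {AP : finType} (T : ktree D AP) e v f :
  omcl_holds T e (oall v f) <-> forall C, is_chain T C -> omcl_holds T (upd e v C) f.
Proof.
  simpl; split.
  - intros H C HC; apply NNPP; intro HN; apply H; exists C; auto.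
  - intros H [C [HC HN]]; apply HN, H, HC.
Qed.

Lemma holds_imp {D : Type} {AP : finType} (T : ktree D AP) e (a b : omcl AP) :
  omcl_holds T e (oimp a b) <-> (omcl_holds T e a -> omcl_holds T e b).
Proof.
  unfold oimp; simpl; split.
  - intros H Ha; apply NNPP; intro; apply H; auto.
  - intros H [Ha Hb]; apply Hb, H, Ha.
Qed.

Lemma holds_or {D : Type} {AP : finType} (T : ktree D AP) e (a b : omcl AP) :
  omcl_holds T e (oor a b) <-> (omcl_holds T e a \/ omcl_holds T e b).
Proof.
  unfold oor; simpl; split.
  - intros H; apply NNPP; intro HN; apply H; split; intro; apply HN; auto.
  - intros [H|H] [H1 H2]; auto.
Qed.

Lemma oempty_sem {D : Type} {AP : finType} (T : ktree D AP) e a k :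
  k <> a -> (omcl_holds T e (oempty a k) <-> forall w, ~ e a w).
Proof.
  intro Hk; unfold oempty; rewrite holds_all; split.
  - intros H w Hw. specialize (H _ (chain_empty T)). simpl in H.
    rewrite upd_ne in H; [|lia]. rewrite upd_eq in H. exact (H w Hw).
  - intros H C HC; simpl; intros w Hw. rewrite upd_ne in Hw; [|lia]. exfalso; exact (H w Hw).
Qed.

Lemma osing_sem {D : Type} {AP : finType} (T : ktree D AP) e a k :
  k <> a -> (forall w, e a w -> knode T w) ->
  (omcl_holds T e (osing a k) <-> exists x, forall v, e a v <-> v = x).
Proof.
  intros Hk Hn; unfold osing. split.
  - intros [H1 H2]. change (~ omcl_holds T e (oempty a k)) in H1. rewrite (oempty_sem _ _ _ _ Hk) in H1.
    apply not_all_ex_not in H1. destruct H1 as [x Hx]. apply NNPP in Hx.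
    exists x; intro v; split; [intro Hv| intros ->; exact Hx].
    rewrite holds_all in H2. specialize (H2 _ (chain_single T v (Hn v Hv))).
    rewrite holds_imp holds_or in H2.
    destruct H2 as [H2|H2].
    + simpl. rewrite upd_eq upd_ne; [|lia]. intros w ->; exact Hv.
    + rewrite oempty_sem in H2; [|lia]. rewrite upd_eq in H2. exfalso; exact (H2 v erefl).
    + simpl in H2. rewrite upd_eq upd_ne in H2; [|lia]. symmetry; exact (H2 x Hx).
  - intros [x Hx]. split.
    + change (~ omcl_holds T e (oempty a k)); rewrite (oempty_sem _ _ _ _ Hk). intro H; apply (H x); apply Hx; reflexivity.
    + rewrite holds_all; intros C HC. rewrite holds_imp holds_or.
      intros Hsub; simpl in Hsub; rewrite upd_eq upd_ne in Hsub; [|lia].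
      destruct (classic (exists w, C w)) as [[w Hw]|Hne].
      * right; simpl; rewrite upd_eq upd_ne; [|lia]. intros v Hv.
        have E1 : v = x by apply Hx.
        have E2 : w = x by apply Hx, Hsub.
        subst; exact Hw.
      * left. rewrite oempty_sem; [|lia]. rewrite upd_eq. intros w Hw; apply Hne; eauto.
Qed.

Ltac updr := repeat first [ rewrite upd_eq | rewrite upd_ne; [|lia] ].
Ltac updrin H := repeat first [ rewrite upd_eq in H | rewrite upd_ne in H; [|lia] ].

Lemma chain_node {D : Type} {AP : finType} (T : ktree D AP) C w :
  is_chain T C -> C w -> knode T w.
Proof. intros [H _]; apply H. Qed.

Lemma ole_sem {D : Type} {AP : finType} (T : ktree D AP) e a b k x y :
  a < k -> b < k -> (forall v, e a v <-> v = x) -> (forall v, e b v <-> v = y) ->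
  knode T y -> (omcl_holds T e (ole a b k) <-> desc x y).
Proof.
  intros Hak Hbk Hx Hy Hny. unfold ole. split.
  - intros [P [HP [Ha [Hb Hall]]]].
    simpl in Ha, Hb. updrin Ha. updrin Hb.
    rewrite holds_all in Hall.
    have Hstep : forall z, P z -> z = x \/ exists u d, P u /\ z = u ++ [d].
    { intros z Hz.
      specialize (Hall (fun v => v = z) (chain_single T z (chain_node T P z HP Hz))).
      rewrite holds_imp holds_or in Hall.
      destruct Hall as [H|H].
      - split.
        + apply osing_sem; [lia| |].
          * intros w; updr; intros ->; exact (chain_node T P z HP Hz).
          * exists z; intro v; updr; tauto.
        + simpl; updr; intros w ->; exact Hz.
      - left. simpl in H. updrin H. apply Hx, H. reflexivity.
      - right. destruct H as [U [HU [Hs [Hsub Hch]]]].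
        apply osing_sem in Hs; [| lia | intros w; updr; apply (chain_node T U w HU)].
        destruct Hs as [u Hu]. updrin Hu.
        simpl in Hsub, Hch. updrin Hsub. updrin Hch.
        have Hu' : U u by (apply Hu; reflexivity).
        destruct (Hch u Hu') as [d Hd].
        exists u, d; split; [exact (Hsub u Hu')| symmetry; exact Hd]. }
    have Hind : forall n z, length z <= n -> P z -> desc x z.
    { intro n; induction n as [|n IH]; intros z Hl Hz;
        (destruct (Hstep z Hz) as [->|[u [d [Hu ->]]]]; [apply desc_refl|]);
        rewrite length_app in Hl; simpl in Hl.
      - lia.
      - apply desc_snoc, IH; [lia| exact Hu]. }
    apply (Hind (length y)); [lia| apply Hb, Hy; reflexivity].
  - intros Hxy.
    exists (fun w => desc x w /\ desc w y). split.
    { split.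
      - intros w [_ Hw]; exact (desc_node T w y Hny Hw).
      - intros w1 w2 [_ H1] [_ H2]; exact (desc_comp w1 w2 y H1 H2). }
    split; [|split].
    + simpl; updr. intros w Hw; apply Hx in Hw; subst; split; [apply desc_refl| exact Hxy].
    + simpl; updr. intros w Hw; apply Hy in Hw; subst; split; [exact Hxy| apply desc_refl].
    + rewrite holds_all; intros Z HZ. rewrite holds_imp; intros [Hs Hsub].
      apply osing_sem in Hs; [| lia | intros w; updr; apply (chain_node T Z w HZ)].
      destruct Hs as [z Hz]. updrin Hz.
      simpl in Hsub; updrin Hsub.
      have HzZ : Z z by (apply Hz; reflexivity).
      destruct (Hsub z HzZ) as [[s Hs] Hzy].
      rewrite holds_or.
      destruct (classic (s = [])) as [Hs0|Hs0].
      * left. simpl; updr. intros w Hw. apply Hx.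
        have E : w = z by (apply Hz; exact Hw).
        subst; rewrite app_nil_r; reflexivity.
      * right. destruct (exists_last Hs0) as [s' [d Hsd]].
        subst s.
        have Hzu : z = (x ++ s') ++ [d] by (rewrite Hs app_assoc; reflexivity).
        have Huy : desc (x ++ s') y by (apply (desc_trans _ z); [exists [d]; exact Hzu| exact Hzy]).
        exists (fun v => v = x ++ s'). split.
        { apply chain_single. exact (desc_node T _ y Hny Huy). }
        split; [|split].
        -- apply osing_sem; [lia| |].
           ++ intros w; updr; intros ->; exact (desc_node T _ y Hny Huy).
           ++ exists (x ++ s'); intro v; updr; tauto.
        -- simpl; updr. intros w ->. split; [exists s'; reflexivity| exact Huy].
        -- simpl; updr. intros w ->. exists d. apply Hz. symmetry; exact Hzu.
Qed.

Fixpoint tr {AP : finType} (phi : mcl AP) : omcl AP :=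
  match phi with
  | MProp p x => OSubP (2 * x) p
  | MLe x y => ole (2 * x) (2 * y) (2 * x + 2 * y + 1)
  | MIn x X => OSub _ (2 * x) (2 * X + 1)
  | MNeg a => ONeg (tr a)
  | MAnd a b => OAnd (tr a) (tr b)
  | MEx x a => OExC (2 * x) (OAnd (osing (2 * x) (2 * x + 1)) (tr a))
  | MExC X a => OExC (2 * X + 1) (tr a)
  end.

Definition Rel {D : Type} {AP : finType} (T : ktree D AP) (e1 : nat -> list D)
  (e2 : nat -> list D -> Prop) (e : nat -> list D -> Prop) : Prop :=
  forall n, knode T (e1 n) /\ (forall w, e (2 * n) w <-> w = e1 n) /\
            (forall w, e (2 * n + 1) w <-> e2 n w).

Lemma Rel_upd1 {D : Type} {AP : finType} (T : ktree D AP) e1 e2 e x w C :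
  Rel T e1 e2 e -> knode T w -> (forall v, C v <-> v = w) ->
  Rel T (upd e1 x w) e2 (upd e (2 * x) C).
Proof.
  intros HR Hw HC n. destruct (HR n) as [H1 [H2 H3]].
  destruct (Nat.eq_dec n x) as [->|Hne].
  - updr. split; [exact Hw| split; [exact HC| exact H3]].
  - updr. auto.
Qed.

Lemma Rel_upd2 {D : Type} {AP : finType} (T : ktree D AP) e1 e2 e X C :
  Rel T e1 e2 e -> Rel T e1 (upd e2 X C) (upd e (2 * X + 1) C).
Proof.
  intros HR n. destruct (HR n) as [H1 [H2 H3]].
  destruct (Nat.eq_dec n X) as [->|Hne].
  - updr. split; [exact H1| split; [exact H2| tauto]].
  - updr. auto.
Qed.

Lemma main1 {D : Type} {AP : finType} (T : ktree D AP) (phi : mcl AP) :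
  forall e1 e2 e, Rel T e1 e2 e -> (mcl_holds T e1 e2 phi <-> omcl_holds T e (tr phi)).
Proof.
  induction phi as [p x|x y|x X|a IH|a IHa b IHb|x a IH|X a IH]; intros e1 e2 e HR; simpl.
  - destruct (HR x) as [_ [H _]]. split.
    + intros Hp w Hw; apply H in Hw; subst; exact Hp.
    + intros Hp; apply Hp, H; reflexivity.
  - destruct (HR x) as [_ [Hx _]]. destruct (HR y) as [Hny [Hy _]].
    symmetry; apply ole_sem; [lia|lia|exact Hx|exact Hy|exact Hny].
  - destruct (HR x) as [_ [Hx _]]. destruct (HR X) as [_ [_ HX]]. split.
    + intros H w Hw; apply Hx in Hw; subst; apply HX, H.
    + intros H; apply HX, H, Hx; reflexivity.
  - rewrite (IH e1 e2 e HR); tauto.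
  - rewrite (IHa e1 e2 e HR) (IHb e1 e2 e HR); tauto.
  - split.
    + intros [w [Hw Ha]]. exists (fun v => v = w). split; [apply chain_single, Hw|].
      split.
      * apply osing_sem; [lia| |].
        -- intros v; updr; intros ->; exact Hw.
        -- exists w; intro v; updr; tauto.
      * apply (IH (upd e1 x w) e2); [|exact Ha].
        apply Rel_upd1; [exact HR| exact Hw| tauto].
    + intros [C [HC [Hs Ha]]].
      apply osing_sem in Hs; [| lia | intros v; updr; apply (chain_node T C v HC)].
      destruct Hs as [w Hw]. updrin Hw.
      have Hnw : knode T w by (apply (chain_node T C w HC), Hw; reflexivity).
      exists w; split; [exact Hnw|].
      apply (IH (upd e1 x w) e2 (upd e (2 * x) C)); [|exact Ha].
      apply Rel_upd1; [exact HR| exact Hnw| exact Hw].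
  - split.
    + intros [C [HC Ha]]. exists C; split; [exact HC|].
      apply (IH e1 (upd e2 X C)); [apply Rel_upd2, HR| exact Ha].
    + intros [C [HC Ha]]. exists C; split; [exact HC|].
      apply (IH e1 (upd e2 X C) (upd e (2 * X + 1) C)); [apply Rel_upd2, HR| exact Ha].
Qed.

Lemma omcl_ext {D : Type} {AP : finType} (T : ktree D AP) (psi : omcl AP) :
  forall e e', (forall n, omcl_fv psi n -> forall w, e n w <-> e' n w) ->
  (omcl_holds T e psi <-> omcl_holds T e' psi).
Proof.
  induction psi as [X p|X Y|X Y|a IH|a IHa b IHb|X a IH]; intros e e' H; simpl in *.
  - split; intros H1 w Hw; apply H1, (H X erefl), Hw.
  - split; intros H1 w Hw.
    + apply (H Y (or_intror erefl)), H1, (H X (or_introl erefl)), Hw.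
    + apply (H Y (or_intror erefl)), H1, (H X (or_introl erefl)), Hw.
  - split; intros H1 w Hw.
    + destruct (H1 w (proj2 (H X (or_introl erefl) w) Hw)) as [d Hd].
      exists d; apply (H Y (or_intror erefl)), Hd.
    + destruct (H1 w (proj1 (H X (or_introl erefl) w) Hw)) as [d Hd].
      exists d; apply (H Y (or_intror erefl)), Hd.
  - rewrite (IH e e' H); tauto.
  - rewrite (IHa e e') ?(IHb e e'); [tauto| |]; intros n Hn; apply H; auto.
  - have E : forall C, omcl_holds T (upd e X C) a <-> omcl_holds T (upd e' X C) a.
    { intros C; apply IH. intros n Hn w. destruct (Nat.eq_dec n X) as [->|Hne].
      - updr; tauto.
      - updr. apply H; auto. }
    split; intros [C [HC Ha]]; exists C; split; auto; apply E; auto.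
Qed.

Lemma osing_fv {AP : finType} a k m : omcl_fv (@osing AP a k) m -> m = a.
Proof. unfold osing, oempty, oall, oimp, oor; simpl; lia. Qed.

Lemma ole_fv {AP : finType} a b k m : omcl_fv (@ole AP a b k) m -> m = a \/ m = b.
Proof. unfold ole, osing, oempty, oall, oimp, oor; simpl; lia. Qed.

Lemma tr_fv {AP : finType} (phi : mcl AP) : forall m, omcl_fv (tr phi) m ->
  exists n, (m = 2 * n /\ mcl_fv1 phi n) \/ (m = 2 * n + 1 /\ mcl_fv2 phi n).
Proof.
  induction phi as [p x|x y|x X|a IH|a IHa b IHb|x a IH|X a IH]; intros m Hm; simpl in *.
  - exists x; left; split; [lia| reflexivity].
  - have [->| ->] : m = 2 * x \/ m = 2 * y by lia.
    + exists x; left; split; auto.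
    + exists y; left; split; auto.
  - destruct Hm as [<-|<-]; [exists x; left| exists X; right]; split; auto.
  - apply IH, Hm.
  - destruct Hm as [Hm|Hm]; [destruct (IHa m Hm) as [n Hn]| destruct (IHb m Hm) as [n Hn]];
      exists n; tauto.
  - destruct Hm as [Hne [Hm|Hm]].
    + exfalso; lia.
    + destruct (IH m Hm) as [n [[E H]|[E H]]]; exists n; [left|right]; split; auto.
      split; [lia| exact H].
  - destruct Hm as [Hne Hm].
    destruct (IH m Hm) as [n [[E H]|[E H]]]; exists n; [left|right]; split; auto.
    split; [lia| exact H].
Qed.

Definition mchild {AP : finType} : mcl AP :=
  MAnd (MLe _ 0 1) (MAnd (MNeg (MLe _ 1 0)) (MNeg (MEx 2 (MAnd (MAnd (MLe _ 0 2) (MNeg (MLe _ 2 0)))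
     (MAnd (MLe _ 2 1) (MNeg (MLe _ 1 2))))))).

Lemma len_eq {D : Type} (a b : list D) : a = b -> length a = length b.
Proof. intros ->; reflexivity. Qed.

Lemma mchild_sem {D : Type} {AP : finType} (T : ktree D AP) e1 e2 :
  knode T (e1 1) -> (mcl_holds T e1 e2 (@mchild AP) <-> exists d, e1 1 = e1 0 ++ [d]).
Proof.
  intros Hn. unfold mchild. simpl.
  set w := e1 0. set v := e1 1. change (knode T v) in Hn. split.
  - intros [[u Hu] [Hnd Hno]].
    destruct u as [|d u].
    + exfalso; apply Hnd; exists []; rewrite Hu !app_nil_r; reflexivity.
    + destruct u as [|d' u]; [exists d; exact Hu|].
      exfalso; apply Hno. exists (w ++ [d]).
      have Hv : v = (w ++ [d]) ++ d' :: u by (rewrite Hu -app_assoc; reflexivity).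
      split; [rewrite Hv in Hn; exact (node_prefix T _ _ Hn)|].
      updr. fold w v. split; split.
      * exists [d]; reflexivity.
      * intros [t Ht]. apply len_eq in Ht; rewrite !length_app in Ht; simpl in Ht; lia.
      * exists (d' :: u); exact Hv.
      * intros [t Ht]. apply len_eq in Ht. apply len_eq in Hv.
        rewrite !length_app in Ht, Hv; simpl in Ht, Hv; lia.
  - intros [d Hd]. split; [exists [d]; exact Hd|]. split.
    + intros [t Ht]. apply len_eq in Ht; rewrite Hd !length_app in Ht; simpl in Ht; lia.
    + intros [z [Hz H]]. updrin H. fold w v in H.
      destruct H as [[[s Hs] Hzw] [[t Ht] Hvz]].
      destruct s as [|s0 s].
      * apply Hzw; exists []; rewrite Hs !app_nil_r; reflexivity.
      * destruct t as [|t0 t].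
        -- apply Hvz; exists []; rewrite Ht !app_nil_r; reflexivity.
        -- apply len_eq in Ht; apply len_eq in Hs; apply len_eq in Hd.
           rewrite !length_app in Ht, Hs, Hd; simpl in Ht, Hs, Hd; lia.
Qed.

Arguments mchild {AP} : simpl never.

Fixpoint trb {AP : finType} (psi : omcl AP) : mcl AP :=
  match psi with
  | OSubP X p => MNeg (MEx 0 (MAnd (MIn _ 0 X) (MNeg (MProp p 0))))
  | OSub X Y => MNeg (MEx 0 (MAnd (MIn _ 0 X) (MNeg (MIn _ 0 Y))))
  | OChild X Y => MNeg (MEx 0 (MAnd (MIn _ 0 X) (MNeg (MEx 1 (MAnd (MIn _ 1 Y) mchild)))))
  | ONeg a => MNeg (trb a)
  | OAnd a b => MAnd (trb a) (trb b)
  | OExC X a => MExC X (trb a)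
  end.

Opaque mchild.
Lemma main2 {D : Type} {AP : finType} (T : ktree D AP) (psi : omcl AP) :
  forall e1 e, (forall n w, e n w -> knode T w) ->
  (mcl_holds T e1 e (trb psi) <-> omcl_holds T e psi).
Proof.
  induction psi as [X p|X Y|X Y|a IH|a IHa b IHb|X a IH]; intros e1 e He.
  - simpl. split.
    + intros H w Hw. destruct (classic (p \in klab T w)) as [Hp|Hp]; [exact Hp|].
      exfalso; apply H; exists w; split; [exact (He X w Hw)|]. updr. split; [exact Hw| exact Hp].
    + intros H [w [Hw [HX Hp]]]. updrin HX. updrin Hp. apply Hp, H, HX.
  - simpl. split.
    + intros H w Hw. destruct (classic (e Y w)) as [Hp|Hp]; [exact Hp|].
      exfalso; apply H; exists w; split; [exact (He X w Hw)|]. updr. split; [exact Hw| exact Hp].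
    + intros H [w [Hw [HX Hp]]]. updrin HX. updrin Hp. apply Hp, H, HX.
  - simpl. split.
    + intros H w Hw. destruct (classic (exists d, e Y (w ++ [d]))) as [Hp|Hno]; [exact Hp|].
      exfalso; apply H; exists w; split; [exact (He X w Hw)|]. updr. split; [exact Hw|].
      intros [v [Hv [HYv Hc]]]. updrin HYv.
      rewrite mchild_sem in Hc; [|updr; exact Hv].
      destruct Hc as [d Hd]. updrin Hd. apply Hno; exists d; rewrite -Hd; exact HYv.
    + intros H [w [Hnw [HXw Hno]]]. updrin HXw. destruct (H w HXw) as [d Hd].
      apply Hno; exists (w ++ [d]); split; [exact (He Y _ Hd)|].
      updr. split; [exact Hd|].
      apply mchild_sem; updr; [exact (He Y _ Hd)| exists d; reflexivity].
  - simpl. rewrite (IH e1 e He); tauto.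
  - simpl. rewrite (IHa e1 e He) (IHb e1 e He); tauto.
  - simpl. have E : forall C, is_chain T C ->
      (mcl_holds T e1 (upd e X C) (trb a) <-> omcl_holds T (upd e X C) a).
    { intros C HC; apply IH. intros n w. destruct (Nat.eq_dec n X) as [->|Hne]; updr.
      - apply (chain_node T C w HC).
      - apply He. }
    split; intros [C [HC Ha]]; exists C; split; auto; apply (E C HC); auto.
Qed.

Transparent mchild.
Lemma trb_fv1 {AP : finType} (psi : omcl AP) n : ~ mcl_fv1 (trb psi) n.
Proof.
  induction psi as [X p|X Y|X Y|a IH|a IHa b IHb|X a IH]; simpl; unfold mchild; simpl; try lia; tauto.
Qed.

Lemma trb_fv2 {AP : finType} (psi : omcl AP) n : mcl_fv2 (trb psi) n -> omcl_fv psi n.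
Proof.
  induction psi as [X p|X Y|X Y|a IH|a IHa b IHb|X a IH]; simpl; unfold mchild; simpl; tauto.
Qed.

Theorem proposition29 (AP : finType) :
  (forall phi : mcl AP, mcl_sentence phi ->
     exists psi : omcl AP, omcl_sentence psi /\
       forall (D : Type) (T : ktree D AP), mcl_sat T phi <-> omcl_sat T psi) /\
  (forall psi : omcl AP, omcl_sentence psi ->
     exists phi : mcl AP, mcl_sentence phi /\
       forall (D : Type) (T : ktree D AP), mcl_sat T phi <-> omcl_sat T psi).
Proof.
  split.
  - intros phi Hs. exists (tr phi).
    have Hs' : omcl_sentence (tr phi).
    { intros m Hm. destruct (tr_fv phi m Hm) as [n [[_ H]|[_ H]]]; [exact (proj1 (Hs n) H)| exact (proj2 (Hs n) H)]. }
    split; [exact Hs'|].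
    intros D T. unfold mcl_sat, omcl_sat.
    rewrite (main1 T phi _ _ (fun m (w : list D) => (exists n, m = 2 * n) /\ w = [])).
    + apply omcl_ext. intros n Hn; exfalso; exact (Hs' n Hn).
    + intros n. split; [apply node_root|]. split.
      * intros w; split; [intros [_ ->]; reflexivity| intros ->; split; [exists n; reflexivity| reflexivity]].
      * intros w; split; [intros [[n' E] _]; lia| intros []].
  - intros psi Hs. exists (trb psi). split.
    + intros n; split; [apply trb_fv1| intro H; apply (Hs n), trb_fv2, H].
    + intros D T. unfold mcl_sat, omcl_sat. apply main2. intros n w [].
Qed.
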